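(* Let $P$ be a finite lattice and let $r:\mathcal{L}_P\to\mathbb{R}_{\ge0}$ satisfy (R.1) $r(f)\le r(g)$ whenever $f\le g$, and (R.2) $r(f+g)=r(f)+r(g)-r(f\cdot g)$ whenever $(f,g)$ is a modular pair in $\mathcal{L}_P$. Then there exists an additive map $\mu:2^P\to\mathbb{R}_{\ge0}$ (i.e. $\mu(S\cup T)=\mu(S)+\mu(T)$ for disjoint $S,T$) such that $r(f)=\mu(P\setminus\Phi f)+r(0)$ for every $f\in\mathcal{L}_P$.
   Context: $P$ is a finite lattice with greatest element $\hat p$. $\mathcal{L}_P$ is the set of maps $f:P\to P$ satisfying (A.1) $a\le f(a)$; (A.2) $a\le b\Rightarrow f(a)\le f(b)$; (A.3) $f(f(a))=f(a)$, ordered pointwise; it is a lattice with join $+$, meet $\cdot$, least element $0$ (identity map). $\Phi f=\{a:f(a)=a\}$. A pair $(f,g)$ in a lattice is a modular pair if $h+(f\cdot g)=(h+f)\cdot g$ for every $h\le g$. *)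

(* Defs.v *)
From HB Require Import structures.
From mathcomp Require Import all_boot all_order all_algebra.
Set Implicit Arguments. Unset Strict Implicit. Unset Printing Implicit Defensive.
Import Order.TTheory GRing.Theory Num.Theory.

Local Open Scope order_scope.

Section ClosureOps.
Variables (d : Order.disp_t) (P : finTBLatticeType d).

Definition closure_op (f : {ffun P -> P}) : bool :=
  [&& [forall a, a <= f a],
      [forall a, forall b, (a <= b) ==> (f a <= f b)] &
      [forall a, f (f a) == f a]].

Definition LP := {f : {ffun P -> P} | closure_op f}.

Definition lep (f g : LP) : bool := [forall a, sval f a <= sval g a].

Definition is_join (j f g : LP) : Prop :=
  [/\ lep f j, lep g j & forall h : LP, lep f h -> lep g h -> lep j h].

Definition is_meet (m f g : LP) : Prop :=
  [/\ lep m f, lep m g & forall h : LP, lep h f -> lep h g -> lep h m].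

(* (f,g) is a modular pair in L_P: h + (f . g) = (h + f) . g for all h <= g *)
Definition modular_pair (f g : LP) : Prop :=
  forall m, is_meet m f g ->
  forall h, lep h g ->
  forall j1, is_join j1 h m ->
  forall j2, is_join j2 h f ->
  forall m2, is_meet m2 j2 g -> j1 = m2.

Lemma closure_op_id : closure_op [ffun a : P => a].
Proof.
apply/and3P; split.
- by apply/forallP => a; rewrite ffunE.
- by apply/forallP => a; apply/forallP => b; rewrite !ffunE; apply/implyP.
- by apply/forallP => a; rewrite !ffunE.
Qed.

Definition LP0 : LP := exist _ [ffun a : P => a] closure_op_id.

Definition Phi (f : LP) : {set P} := [set a | sval f a == a].

End ClosureOps.

(* Main.v *)
Require Import Defs.
From HB Require Import structures.
From mathcomp Require Import all_boot all_order all_algebra.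
From mathcomp Require Import lra.
Import Order.TTheory GRing.Theory Num.Theory.
Set Implicit Arguments. Unset Strict Implicit.

Section Aux.
Local Open Scope order_scope.
Variables (d : Order.disp_t) (P : finTBLatticeType d).
Implicit Types (f g h : LP P) (S : {set P}) (a b : P).

Lemma clo_ext f a : a <= sval f a.
Proof. by case/and3P: (svalP f) => /forallP H _ _. Qed.
Lemma clo_mono f a b : a <= b -> sval f a <= sval f b.
Proof. by case/and3P: (svalP f) => _ /forallP H _ ab; move/forallP: (H a) => /(_ b); rewrite ab. Qed.
Lemma clo_idem f a : sval f (sval f a) = sval f a.
Proof. by case/and3P: (svalP f) => _ _ /forallP H; apply/eqP. Qed.

Lemma lep_Phi f g : lep f g = (Phi g \subset Phi f).
Proof.
apply/forallP/subsetP.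
- move=> H a; rewrite !inE => /eqP ga; apply/eqP/le_anti.
  by rewrite clo_ext andbT; have := H a; rewrite ga.
- move=> H a; have : sval g a \in Phi f by apply: H; rewrite inE clo_idem.
  rewrite inE => /eqP e; rewrite -e; apply: clo_mono; exact: clo_ext.
Qed.

Lemma Phi_inj f g : Phi f = Phi g -> f = g.
Proof.
move=> e; have h1 : lep f g by rewrite lep_Phi e.
have h2 : lep g f by rewrite lep_Phi e.
apply/val_inj/ffunP => a; apply/le_anti; by rewrite (forallP h1) (forallP h2).
Qed.

Definition moore (S : {set P}) : Prop :=
  \top \in S /\ forall a b, a \in S -> b \in S -> a `&` b \in S.

Definition opf (S : {set P}) : {ffun P -> P} :=
  [ffun a => \meet_(y | (y \in S) && (a <= y)) y].

Lemma opf_in S a : moore S -> opf S a \in S.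
Proof.
case=> T M; rewrite ffunE.
apply: (big_ind (fun x => x \in S)) => //; do ?[by move=> ? ? ? ?; apply: M | by move=> ? /andP[]].
Qed.
Lemma opf_ge S a : a <= opf S a.
Proof. by rewrite ffunE; apply/meetsP => y /andP[]. Qed.
Lemma opf_le S a (y : P) : y \in S -> a <= y -> opf S a <= y.
Proof. by move=> yS ay; rewrite ffunE; apply: meets_inf; rewrite yS ay. Qed.
Lemma opf_fix S a : a \in S -> opf S a = a.
Proof. by move=> aS; apply/le_anti; rewrite opf_le // opf_ge. Qed.

Lemma closure_opf S : moore S -> closure_op (opf S).
Proof.
move=> H; apply/and3P; split; apply/forallP => a.
- exact: opf_ge.
- apply/forallP => b; apply/implyP => ab; apply: opf_le; first exact: opf_in.
  exact: le_trans ab (opf_ge _ _).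
- by apply/eqP/opf_fix/opf_in.
Qed.

Definition mk S (H : moore S) : LP P := exist _ (opf S) (@closure_opf S H).

Lemma Phi_mk S H : Phi (@mk S H) = S.
Proof.
apply/setP => a; rewrite inE /=; apply/eqP/idP; last exact: opf_fix.
move=> <-; exact: opf_in.
Qed.

Lemma moore_Phi f : moore (Phi f).
Proof.
split.
- by rewrite inE; apply/eqP/le_anti; rewrite clo_ext andbT lex1.
- move=> a b; rewrite !inE => /eqP fa /eqP fb; apply/eqP/le_anti.
  rewrite clo_ext andbT lexI; apply/andP; split.
  by rewrite -{2}fa; apply: clo_mono; rewrite leIl.
  by rewrite -{2}fb; apply: clo_mono; rewrite leIr.
Qed.

Lemma mooreI S T : moore S -> moore T -> moore (S :&: T).
Proof.
case=> t1 m1 [t2 m2]; split; first by rewrite inE t1 t2.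
by move=> a b; rewrite !inE => /andP[aS aT] /andP[bS bT]; rewrite m1 ?m2.
Qed.

Lemma moore2 x : moore [set x; \top].
Proof.
split; first by rewrite !inE eqxx orbT.
move=> a b; rewrite !inE => /orP[]/eqP-> /orP[]/eqP->;
  by rewrite ?meetxx ?meetx1 ?meet1x eqxx ?orbT.
Qed.

Lemma moore1 : moore [set \top].
Proof. by split; rewrite ?inE // => a b; rewrite !inE => /eqP-> /eqP->; rewrite meetxx. Qed.

Lemma join_Phi j f g : is_join j f g -> Phi j = Phi f :&: Phi g.
Proof.
case=> fj gj H; apply/eqP; rewrite eqEsubset subsetI -!lep_Phi fj gj /=.
have K := mooreI (moore_Phi f) (moore_Phi g).
rewrite -{1}(Phi_mk K) -lep_Phi ?andbT; apply: H; rewrite lep_Phi Phi_mk ?subsetIl ?subsetIr //.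
Qed.

Lemma meet_Phi m f g : is_meet m f g -> moore (Phi f :|: Phi g) ->
  Phi m = Phi f :|: Phi g.
Proof.
case=> mf mg H K; apply/eqP; rewrite eqEsubset subUset -!lep_Phi mf mg andbT.
rewrite -{1}(Phi_mk K) -lep_Phi ?andbT; apply: H; rewrite lep_Phi Phi_mk ?subsetUl ?subsetUr //.
Qed.

Lemma Phi0 : Phi (LP0 P) = setT.
Proof. by apply/setP => a; rewrite !inE /= ffunE eqxx. Qed.

Section Step.
Variables (f : LP P) (x : P) (xnf : x \notin Phi f) (HM : moore (x |: Phi f)).
Let B := mk (moore2 x).
Let T := mk moore1.
Let M := mk HM.

Lemma topf : \top \in Phi f. Proof. by case: (moore_Phi f). Qed.

Lemma step_join : is_join T f B.
Proof.
split; rewrite ?lep_Phi ?Phi_mk ?sub1set ?topf ?inE ?eqxx ?orbT //.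
move=> h; rewrite !lep_Phi !Phi_mk => hf hB; apply/subsetP => y yh.
have := subsetP hB y yh; rewrite !inE => /orP[/eqP ey|//].
by move: (subsetP hf y yh); rewrite ey (negbTE xnf).
Qed.

Lemma PhiU : Phi f :|: Phi B = x |: Phi f.
Proof.
rewrite Phi_mk; apply/setP => y; rewrite in_setU in_setU1 in_set2.
case: (eqVneq y x) => [->|]; rewrite ?orbT //= ?orbF.
case: (eqVneq y \top) => [->|]; rewrite ?topf ?orbT ?orbF //.
Qed.

Lemma step_meet : is_meet M f B.
Proof.
have PM : Phi M = Phi f :|: Phi B by rewrite /M Phi_mk PhiU.
split; rewrite ?lep_Phi ?PM ?subsetUl ?subsetUr //.
move=> h hf hB; rewrite lep_Phi PM subUset -!lep_Phi hf hB //.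
Qed.

Lemma step_mod : modular_pair f B.
Proof.
move=> m Hm h hB j1 Hj1 j2 Hj2 m2 Hm2; apply: Phi_inj.
have PM : Phi m = x |: Phi f by rewrite (meet_Phi Hm) PhiU.
have xh : x \in Phi h by move: hB; rewrite lep_Phi Phi_mk => /subsetP; apply; rewrite !inE eqxx.
have th : \top \in Phi h by case: (moore_Phi h).
have E : Phi j2 :|: Phi B = Phi h :&: (x |: Phi f).
  rewrite (join_Phi Hj2) Phi_mk; apply/setP => y.
  rewrite in_setU in_setI in_setI in_setU1 in_set2.
  case: (eqVneq y x) => [->|]; rewrite ?xh ?orbT //= ?orbF.
  case: (eqVneq y \top) => [->|]; rewrite ?th ?topf ?orbT ?orbF ?andbT //.
rewrite (join_Phi Hj1) PM (meet_Phi Hm2) E //.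
rewrite -E; rewrite E; exact: mooreI (moore_Phi h) HM.
Qed.

End Step.
End Aux.

Local Open Scope ring_scope.

Theorem mainTheorem16 (d : Order.disp_t) (P : finTBLatticeType d)
    (R : realFieldType) (r : LP P -> R)
    (r_nonneg : forall f, 0 <= r f)
    (R1 : forall f g, lep f g -> r f <= r g)
    (R2 : forall f g j m, is_join j f g -> is_meet m f g -> modular_pair f g ->
            r j = r f + r g - r m) :
  exists mu : {set P} -> R,
    [/\ forall S : {set P}, 0 <= mu S,
        forall S T : {set P}, [disjoint S & T] -> mu (S :|: T) = mu S + mu T &
        forall f : LP P, r f = mu (~: Phi f) + r (LP0 P)].
Proof.
pose T := mk (moore1 P).
pose w (x : P) := r T - r (mk (moore2 x)).
have w0 x : 0 <= w x.
  rewrite subr_ge0; apply: R1; rewrite lep_Phi !Phi_mk sub1set !inE eqxx orbT //.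
exists (fun S : {set P} => \sum_(x in S) w x); split.
- by move=> S; apply: sumr_ge0.
- by move=> S U dSU; rewrite -bigU //; apply: eq_bigl => i; rewrite inE.
suff H : forall n (f : LP P), (#|~: Phi f| <= n)%N ->
    r f = \sum_(x in ~: Phi f) w x + r (LP0 P) by move=> f; exact: H.
elim=> [|n IH] f.
  rewrite leqn0 cards_eq0 => /eqP e.
  have -> : f = LP0 P by apply: Phi_inj; rewrite Phi0 -[Phi f]setCK e setC0.
  by rewrite Phi0 setCT big_set0 add0r.
move=> Hn.
case: (set_0Vmem (~: Phi f)) => [e|[x0 Hx0]].
  by apply: IH; rewrite e cards0.
case: (arg_minnP (fun x => #|[set z | (z <= x)%O]|) Hx0) => x Hx Hmin.
have below : forall z, (z < x)%O -> z \in Phi f.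
  move=> z zx; apply/negP => zn.
  have zc : z \in ~: Phi f by rewrite in_setC; apply/negP.
  have := Hmin z zc; apply/negP; rewrite -ltnNge.
  apply: proper_card; apply/properP; split.
    apply/subsetP => y; rewrite !inE => yz; exact: le_trans yz (ltW zx).
  by exists x; rewrite !inE ?lexx // (lt_geF zx).
have Hx' : x \in ~: Phi f := Hx.
have xnf : x \notin Phi f by rewrite -in_setC.
have HM : moore (x |: Phi f).
  have [tf mf] := moore_Phi f.
  have key : forall b, b \in x |: Phi f -> (x `&` b)%O \in x |: Phi f.
    move=> b; rewrite !in_setU1 => /orP[/eqP->|bf]; first by rewrite meetxx eqxx.
    case: (eqVneq (x `&` b)%O x) => [e|ne]; first by rewrite e.
    by rewrite below ?orbT // lt_neqAle ne leIl.
  split; first by rewrite in_setU1 tf orbT.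
  move=> a b; rewrite {1}in_setU1 => /orP[/eqP->|af]; first exact: key.
  rewrite in_setU1 => /orP[/eqP->|bf]; first by rewrite meetC key // in_setU1 af orbT.
  by rewrite in_setU1 mf ?orbT.
pose M := mk HM.
have Hstep : r f = r M + w x.
  have := R2 _ _ _ _ (step_join xnf) (step_meet HM) (@step_mod _ _ f x HM).
  rewrite /w /T => ->; lra.
have CM : ~: Phi M = ~: Phi f :\ x.
  apply/setP => y; rewrite Phi_mk in_setD1 !in_setC in_setU1 negb_or //.
rewrite Hstep IH; last first.
  by move: Hn; rewrite CM (cardsD1 x (~: Phi f)) Hx'.
by rewrite CM (big_setD1 x Hx') /=; lra.
Qed.
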